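(* Let $(\mathbb{P},\le,f)$ be a forcing property for $\mathcal{L}_A$. Every condition $p\in\mathbb{P}$ belongs to a generic set.
   Context: $\mathcal{L}$ is a countable continuous signature; formulas of $\mathcal{L}_{\omega_1,\omega}$ are built from atomic formulas using $\neg$, $\tfrac12$, $\dotplus$, countable conjunctions $\bigwedge$ and $\inf_x$. $\mathcal{L}_A$ is a countable fragment, $C=\{c_i:i<\omega\}$ new constants, $\mathcal{L}_A(C)$ the smallest countable fragment of $\mathcal{L}_{\omega_1,\omega}(C)$ containing $\mathcal{L}_A$ (a countable set), $\mathcal{L}_A^s(C)$ its sentences, $\mathcal{L}_A^{as}(C)$ its atomic sentences, $\mathcal{T}(C)$ closed terms. A forcing property $(\mathbb{P},\le,f)$: poset with $f_p\colon\mathcal{L}_A^{as}(C)\to[0,1]$ such that (1) $p\le q\Rightarrow f_p\le f_q$; (2) for every $p$, $\varepsilon>0$, $\tau,\sigma\in\mathcal{T}(C)$, atomic $\varphi(x)$ there are $q\le p$, $c\in C$ with $f_q(d(\tau,c))<\varepsilon$, $f_q(d(\tau,\sigma))<f_p(d(\sigma,\tau))+\varepsilon$, and if $f_p(d(\tau,\sigma))<\delta_{\varphi,x}(\varepsilon)$ then $f_q(\varphi(\sigma))<f_p(\varphi(\tau))+\varepsilon$. $F_p$: $f_p$ on atomics; $F_p(\neg\varphi)=1-\inf_{q\le p}F_q(\varphi)$; $F_p(\tfrac12\varphi)=\tfrac12F_p(\varphi)$; $F_p(\varphi\dotplus\psi)=\min(F_p(\varphi)+F_p(\psi),1)$; $F_p(\bigwedge\Phi)=\inf_{\varphi\in\Phi}F_p(\varphi)$;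 $F_p(\inf_x\varphi)=\inf_{c\in C}F_p(\varphi(c))$. A nonempty $G\subseteq\mathbb{P}$ is generic if it is downward directed (any two elements have a common lower bound in $G$), upward closed, and for every $\varphi\in\mathcal{L}_A^s(C)$ and $r>1$ there is $p\in G$ with $F_p(\varphi)+F_p(\neg\varphi)<r$. *)

(* Defs.v *)
From HB Require Import structures.
From mathcomp Require Import all_boot all_order all_algebra.
From mathcomp Require Import boolp classical_sets cardinality reals.

Set Implicit Arguments.
Unset Strict Implicit.
Unset Printing Implicit Defensive.

Import Order.TTheory GRing.Theory Num.Theory.
Local Open Scope classical_set_scope.
Local Open Scope ring_scope.

(* Countable continuous signature: countably many function and predicate    *)
(* symbols with arities (the distance symbol d is built in).                *)
Record signature := Signature {
  fsym : countType ;
  f_arity : fsym -> nat ;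
  rsym : countType ;
  r_arity : rsym -> nat }.

Section Syntax.
Variable L : signature.

(* Terms of L(C): de Bruijn variables, the new constants c_i (i : nat),     *)
(* and applications of function symbols.                                    *)
Inductive term : Type :=
  | Var : nat -> term
  | Cst : nat -> term
  | App (g : fsym L) : ('I_(f_arity g) -> term) -> term.

Inductive atom : Type :=
  | ADist : term -> term -> atom
  | ARel (r : rsym L) : ('I_(r_arity r) -> term) -> atom.

(* Formulas of L_{omega_1,omega}(C): built with neg, 1/2, dotplus,          *)
(* countable conjunctions (of a countable nonempty set, given by an         *)
(* enumeration) and inf_x (de Bruijn: Inf binds variable 0).                *)
Inductive formula : Type :=
  | Atom : atom -> formula
  | Neg : formula -> formula
  | Half : formula -> formula
  | Plus : formula -> formula -> formula
  | Conj : (nat -> formula) -> formula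
  | Inf : formula -> formula.

Fixpoint tsubst (s : nat -> term) (t : term) : term :=
  match t with
  | Var n => s n
  | Cst i => Cst i
  | App g a => App (fun i => tsubst s (a i))
  end.

Definition asubst (s : nat -> term) (a : atom) : atom :=
  match a with
  | ADist t1 t2 => ADist (tsubst s t1) (tsubst s t2)
  | ARel r a => ARel (fun i => tsubst s (a i))
  end.

Definition up (s : nat -> term) : nat -> term :=
  fun n => match n with
           | 0 => Var 0
           | m.+1 => tsubst (fun k => Var k.+1) (s m)
           end.

Fixpoint fsubst (s : nat -> term) (phi : formula) : formula :=
  match phi with
  | Atom a => Atom (asubst s a)
  | Neg psi => Neg (fsubst s psi)
  | Half psi => Half (fsubst s psi)
  | Plus psi chi => Plus (fsubst s psi) (fsubst s chi)
  | Conj Phi => Conj (fun i => fsubst s (Phi i))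
  | Inf psi => Inf (fsubst (up s) psi)
  end.

Definition scons (t : term) (e : nat -> term) : nat -> term :=
  fun n => match n with 0 => t | m.+1 => e m end.

(* phi(t) for phi with the single free variable x = 0 *)
Definition ainst (t : term) (a : atom) : atom := asubst (scons t Var) a.

Fixpoint tfree (x : nat) (t : term) : Prop :=
  match t with
  | Var n => n = x
  | Cst _ => False
  | App g a => exists i, tfree x (a i)
  end.

Definition afree (x : nat) (a : atom) : Prop :=
  match a with
  | ADist t1 t2 => tfree x t1 \/ tfree x t2
  | ARel r a => exists i, tfree x (a i)
  end.

Fixpoint ffree (x : nat) (phi : formula) : Prop :=
  match phi with
  | Atom a => afree x a
  | Neg psi => ffree x psi
  | Half psi => ffree x psi
  | Plus psi chi => ffree x psi \/ ffree x chi
  | Conj Phi => exists i, ffree x (Phi i)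
  | Inf psi => ffree x.+1 psi
  end.

Definition closed_term (t : term) : Prop := forall x, ~ tfree x t.
Definition closed_atom (a : atom) : Prop := forall x, ~ afree x a.
Definition sentence (phi : formula) : Prop := forall x, ~ ffree x phi.

(* No constant from C occurs (i.e. the term/formula belongs to L). *)
Fixpoint tnoC (t : term) : Prop :=
  match t with
  | Var _ => True
  | Cst _ => False
  | App g a => forall i, tnoC (a i)
  end.

Definition anoC (a : atom) : Prop :=
  match a with
  | ADist t1 t2 => tnoC t1 /\ tnoC t2
  | ARel r a => forall i, tnoC (a i)
  end.

Fixpoint fnoC (phi : formula) : Prop :=
  match phi with
  | Atom a => anoC a
  | Neg psi => fnoC psi
  | Half psi => fnoC psi
  | Plus psi chi => fnoC psi /\ fnoC chi
  | Conj Phi => forall i, fnoC (Phi i)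
  | Inf psi => fnoC psi
  end.

(* withC = false : the language L ; withC = true : the language L(C). *)
Definition okt (withC : bool) (t : term) : Prop := if withC then True else tnoC t.
Definition oka (withC : bool) (a : atom) : Prop := if withC then True else anoC a.
Definition okf (withC : bool) (phi : formula) : Prop :=
  if withC then True else fnoC phi.

Definition fragment (withC : bool) (F : set formula) : Prop :=
  [/\ forall phi, F phi ->
        okf withC phi /\ exists n, forall x, ffree x phi -> (x < n)%N,
      forall a, oka withC a -> F (Atom a),
      (forall psi, F (Neg psi) -> F psi) /\ (forall psi, F (Half psi) -> F psi) /\
      (forall psi chi, F (Plus psi chi) -> F psi /\ F chi) /\
      (forall Phi, F (Conj Phi) -> forall i, F (Phi i)) /\
      (forall psi, F (Inf psi) -> F psi),
      (forall psi, F psi -> F (Neg psi)) /\ (forall psi, F psi -> F (Half psi)) /\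
      (forall psi chi, F psi -> F chi -> F (Plus psi chi)) /\
      (forall psi, F psi -> F (Inf psi))
    & forall s phi, (forall n, okt withC (s n)) -> F phi -> F (fsubst s phi)].

Definition LAC (LA : set formula) : set formula :=
  fun phi => forall F, fragment true F -> countable F -> LA `<=` F -> F phi.

End Syntax.

Arguments Var {L}.
Arguments Cst {L}.

Section Forcing.
Variables (R : realType) (L : signature) (P : Type) (le : P -> P -> Prop)
          (f : P -> atom L -> R).

Fixpoint Fv (e : nat -> term L) (phi : formula L) (p : P) : R :=
  match phi with
  | Atom a => f p (asubst e a)
  | Neg psi => 1 - inf [set Fv e psi q | q in [set q | le q p]]
  | Half psi => Fv e psi p / 2
  | Plus psi chi => Num.min (Fv e psi p + Fv e chi p) 1
  | Conj Phi => inf [set Fv e (Phi i) p | i in [set: nat]]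
  | Inf psi => inf [set Fv (scons (Cst c) e) psi p | c in [set: nat]]
  end.

Definition F (p : P) (phi : formula L) : R := Fv Var phi p.

(* Forcing property (P, <=, f); delta a eps is the modulus delta_{phi,x}(eps) *)
(* of the atomic formula a = phi(x) (x = de Bruijn variable 0).              *)
Definition forcing_property (delta : atom L -> R -> R) : Prop :=
  [/\ (forall p, le p p) /\ (forall p q r, le p q -> le q r -> le p r) /\
      (forall p q, le p q -> le q p -> p = q),
      forall p a, closed_atom a -> 0 <= f p a <= 1,
      forall p q a, closed_atom a -> le p q -> f p a <= f q a
    & forall p (eps : R) (tau sigma : term L) (a : atom L),
        0 < eps -> closed_term tau -> closed_term sigma ->
        (forall x, afree x a -> x = 0%N) ->
        exists q c, [/\ le q p,
          f q (ADist tau (Cst c)) < eps,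
          f q (ADist tau sigma) < f p (ADist sigma tau) + eps
        & f p (ADist tau sigma) < delta a eps ->
          f q (ainst sigma a) < f p (ainst tau a) + eps]].

Definition generic (LA : set (formula L)) (G : set P) : Prop :=
  [/\ G !=set0,
      forall p q, G p -> G q -> exists2 r, G r & le r p /\ le r q,
      forall p q, G p -> le p q -> G q
    & forall (phi : formula L) (r : R), LAC LA phi -> sentence phi -> 1 < r ->
        exists2 p, G p & F p phi + F p (Neg phi) < r].

End Forcing.

(* Main.v *)
Require Import Defs.
From HB Require Import structures.
From mathcomp Require Import all_boot all_order all_algebra.
From mathcomp Require Import boolp classical_sets cardinality reals.
From mathcomp Require Import lra.
Import Order.TTheory GRing.Theory Num.Theory.
Local Open Scope classical_set_scope.

Section Enc.
Variable L : signature.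

Fixpoint encT (t : term L) : GenTree.tree nat :=
  match t with
  | Var n => GenTree.Node 0 [:: GenTree.Leaf n]
  | Cst n => GenTree.Node 1 [:: GenTree.Leaf n]
  | App g a => GenTree.Node 2 (GenTree.Leaf (pickle g) ::
                 [seq encT (a i) | i <- enum 'I_(f_arity g)])
  end.

Fixpoint decT (c : GenTree.tree nat) : option (term L) :=
  match c with
  | GenTree.Node 0 [:: GenTree.Leaf n] => Some (Var n)
  | GenTree.Node 1 [:: GenTree.Leaf n] => Some (Cst n)
  | GenTree.Node 2 (GenTree.Leaf k :: cs) =>
      match (unpickle k : option (Defs.fsym L)) with
      | Some g => let ds := map decT cs in
          Some (App (fun i : 'I_(f_arity g) => odflt (Var 0) (nth None ds i)))
      | None => None end
  | _ => None
  end.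

Lemma encTK : pcancel encT decT.
Proof.
elim=> [n|n|g a IH] //=.
rewrite pickleK; congr Some; congr App; apply: funext => i.
rewrite -map_comp (@eq_map _ _ _ (fun i => Some (a i))); last by move=> j /=; rewrite IH.
by rewrite (nth_map i) ?size_enum_ord // nth_ord_enum.
Qed.

HB.instance Definition _ := Countable.copy (term L) (pcan_type encTK).

Definition encA (x : atom L) : GenTree.tree (term L + rsym L) :=
  match x with
  | ADist t1 t2 => GenTree.Node 0 [:: GenTree.Leaf (inl t1); GenTree.Leaf (inl t2)]
  | ARel r a => GenTree.Node 1 (GenTree.Leaf (inr r) ::
                 [seq GenTree.Leaf (inl (a i)) | i <- enum 'I_(r_arity r)])
  end.

Definition getT (c : GenTree.tree (term L + rsym L)) : term L :=
  match c with GenTree.Leaf (inl t) => t | _ => Var 0 end.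

Definition decA (c : GenTree.tree (term L + rsym L)) : option (atom L) :=
  match c with
  | GenTree.Node 0 [:: GenTree.Leaf (inl t1); GenTree.Leaf (inl t2)] => Some (ADist t1 t2)
  | GenTree.Node 1 (GenTree.Leaf (inr r) :: cs) =>
      Some (ARel (fun i : 'I_(r_arity r) => getT (nth (GenTree.Leaf (inl (Var 0))) cs i)))
  | _ => None
  end.

Lemma encAK : pcancel encA decA.
Proof.
case=> [t1 t2|r a] //=.
congr Some; congr ARel; apply: funext => i.
by rewrite (nth_map i) ?size_enum_ord // nth_ord_enum.
Qed.

HB.instance Definition _ := Countable.copy (atom L) (pcan_type encAK).

End Enc.

Set Implicit Arguments.

Lemma my_bigmax n (N : 'I_n -> nat) i : (N i <= \big[maxn/0%N]_(j : 'I_n) N j)%N.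
Proof. exact: leq_bigmax. Qed.

Section Syn.
Variable L : signature.
Implicit Types (t : term L) (phi : formula L) (s : nat -> term L).

Lemma tsubst_ext t s s' : (forall x, tfree x t -> s x = s' x) -> tsubst s t = tsubst s' t.
Proof.
elim: t s s' => [n|n|g a IH] s s' H //=; first exact: H.
congr App; apply: funext => i; apply: IH => x Hx; apply: H; by exists i.
Qed.

Lemma fsubst_ext phi s s' : (forall x, ffree x phi -> s x = s' x) ->
  fsubst s phi = fsubst s' phi.
Proof.
elim: phi s s' => [a|psi IH|psi IH|psi IH chi IH2|Phi IH|psi IH] s s' H /=.
- case: a H => [t1 t2|r a] /= H; congr Atom.
    rewrite (@tsubst_ext t1 s s'); last by move=> x Hx; apply: H; left.
    by rewrite (@tsubst_ext t2 s s') // => x Hx; apply: H; right.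
  congr ARel; apply: funext => i; apply: tsubst_ext => x Hx; apply: H; by exists i.
- by rewrite (IH s s').
- by rewrite (IH s s').
- rewrite (IH s s'); last by move=> x Hx; apply: H; left.
  by rewrite (IH2 s s') // => x Hx; apply: H; right.
- by congr Conj; apply: funext => i; apply: IH => x Hx; apply: H; exists i.
- congr Inf; apply: IH => -[|x] Hx //=; by rewrite H.
Qed.

Lemma tfree_subst x t s : tfree x (tsubst s t) -> exists y, tfree y t /\ tfree x (s y).
Proof.
elim: t x => [n|n|g a IH] x //=; first by move=> H; exists n.
move=> [i /IH [y [H1 H2]]]; exists y; split => //; by exists i.
Qed.

Lemma ffree_subst x phi s : ffree x (fsubst s phi) -> exists y, ffree y phi /\ tfree x (s y).
Proof.
elim: phi x s => [a|psi IH|psi IH|psi IH chi IH2|Phi IH|psi IH] x s /=.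
- case: a => [t1 t2|r a] /=.
    by case=> /tfree_subst [y [H1 H2]]; exists y; split => //; [left|right].
  by case=> i /tfree_subst [y [H1 H2]]; exists y; split => //; exists i.
- exact: IH.
- exact: IH.
- case=> [/IH|/IH2] [y [H1 H2]]; exists y; split => //; [left|right]; done.
- by case=> i /IH [y [H1 H2]]; exists y; split => //; exists i.
- move=> /IH [[|m] [H1 H2]] /=; first by [].
  have [z [Hz1 Hz2]] := tfree_subst _ _ _ H2.
  move: Hz2 => /= [<-]; by exists m.
Qed.

Definition bnd (P : nat -> Prop) := exists n, forall x, P x -> (x < n)%N.

Lemma bnd_term t : bnd (fun x => tfree x t).
Proof.
elim: t => [n|n|g a IH]; first by exists n.+1 => x /= ->.
  by exists 0%N.
have [N HN] := choice IH.
exists (\big[maxn/0%N]_(j : 'I__) N j) => x [i /HN Hx]; apply: (leq_trans Hx); exact: my_bigmax.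
Qed.

Lemma bnd_atom (a : atom L) : bnd (fun x => afree x a).
Proof.
case: a => [t1 t2|r a] /=.
  have [n1 H1] := bnd_term t1; have [n2 H2] := bnd_term t2.
  exists (maxn n1 n2) => x [/H1|/H2] Hx; rewrite leq_max Hx ?orbT //.
have [N HN] := choice (fun i => bnd_term (a i)).
exists (\big[maxn/0%N]_(j : 'I__) N j) => x [i /HN Hx]; apply: (leq_trans Hx); exact: my_bigmax.
Qed.

Lemma bnd_terms (l : seq (term L)) : exists n, forall d y x, tfree x (nth d l y) -> (y < size l)%N -> (x < n)%N.
Proof.
elim: l => [|t l [n Hn]]; first by exists 0%N.
have [m Hm] := bnd_term t.
exists (maxn m n) => d [|y] x /= Hx Hy.
  by rewrite leq_max Hm.
by rewrite leq_max (Hn d y x Hx Hy) orbT.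
Qed.

End Syn.


Lemma countableU T (A B : set T) : countable A -> countable B -> countable (A `|` B).
Proof.
move=> cA cB.
have -> : A `|` B = \bigcup_(b in [set: bool]) (if b then A else B).
  apply/seteqP; split=> x.
    by case=> H; [exists true|exists false].
  by case=> -[] _ H; [left|right].
by apply: bigcup_countable => // -[].
Qed.

Lemma countable_img T U (f : T -> U) (A : set T) : countable A -> countable (f @` A).
Proof. exact: sub_countable (card_image_le f A). Qed.

Section Frag.
Variable L : signature.
Variable LA : set (formula L).
Implicit Types (phi : formula L).

Definition pN phi := match phi with Neg p => p | _ => phi end.
Definition pH phi := match phi with Half p => p | _ => phi end.
Definition pP1 phi := match phi with Plus p _ => p | _ => phi end.
Definition pP2 phi := match phi with Plus _ p => p | _ => phi end.
Definition pC i phi := match phi with Conj Phi => Phi i | _ => phi end.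
Definition pI phi := match phi with Inf p => p | _ => phi end.
Definition sub (x : formula L * seq (term L)) := fsubst (fun n => nth (Var n) x.2 n) x.1.
Definition mkP (x : formula L * formula L) := @Plus L x.1 x.2.

Definition ops (S : set (formula L)) : set (formula L) :=
  pN @` S `|` pH @` S `|` pP1 @` S `|` pP2 @` S `|`
  (\bigcup_(i in [set: nat]) pC i @` S) `|` pI @` S `|` (@Neg L) @` S `|` (@Half L) @` S `|`
  mkP @` (S `*` S) `|` (@Inf L) @` S `|` sub @` (S `*` [set: seq (term L)]).

Fixpoint stage k := match k with 0 => LA `|` range (@Atom L) | k.+1 => stage k `|` ops (stage k) end.

Definition Fr := \bigcup_(k in [set: nat]) stage k.

Lemma countable_ops S : countable S -> countable (ops S).
Proof.
move=> cS.
repeat apply: countableU; try exact: countable_img.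
- by apply: bigcup_countable => // i _; exact: countable_img.
- by apply: countable_img; exact: countableX.
- by apply: countable_img; apply: countableX.
Qed.

Lemma countable_stage : countable LA -> forall k, countable (stage k).
Proof.
move=> cLA; elim=> [|k IH] /=.
  by apply: countableU => //; exact: countable_img.
by apply: countableU => //; exact: countable_ops.
Qed.

Lemma countable_Fr : countable LA -> countable Fr.
Proof. by move=> cLA; apply: bigcup_countable => // k _; exact: countable_stage. Qed.

Lemma stage_mono k m : (k <= m)%N -> stage k `<=` stage m.
Proof.
elim: m => [|m IH]; first by rewrite leqn0 => /eqP ->.
rewrite leq_eqVlt => /orP[/eqP -> //|]; rewrite ltnS => /IH H x /H Hx; by left.
Qed.

End Frag.


Section Frag2.
Variable L : signature.
Variable LA : set (formula L).
Implicit Types (phi : formula L).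
Definition bf phi := bnd (fun x => ffree x phi).

Lemma bf_sub phi l : bf phi -> bf (sub (phi, l)).
Proof.
move=> [n Hn]; have [m Hm] := bnd_terms l.
exists (maxn m n) => x /ffree_subst [y [H1 H2]].
case: (ltnP y (size l)) => Hy.
  by rewrite leq_max (Hm _ _ _ H2 Hy).
move: H2; rewrite nth_default //= => <-.
by rewrite leq_max (Hn _ H1) orbT.
Qed.

Lemma bnd_ops (S : set (formula L)) : (forall phi, S phi -> bf phi) ->
  forall phi, ops S phi -> bf phi.
Proof.
move=> HS phi [[[[[[[[[[H|H]|H]|H]|H]|H]|H]|H]|H]|H]|H].
- by case: H => x /HS [n Hn] <-; exists n => y Hy; apply: Hn; case: x Hy.
- by case: H => x /HS [n Hn] <-; exists n => y Hy; apply: Hn; case: x Hy.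
- by case: H => x /HS [n Hn] <-; exists n => y Hy; apply: Hn; case: x Hy => //= *; left.
- by case: H => x /HS [n Hn] <-; exists n => y Hy; apply: Hn; case: x Hy => //= *; right.
- case: H => i _ [x /HS [n Hn] <-]; exists n => y Hy; apply: Hn.
  by case: x Hy => //= Phi Hy; exists i.
- case: H => x /HS [n Hn] <-; exists n.+1 => y Hy.
  case: x Hn Hy => [a|p|p|p q|Phi|p] Hn /= Hy; try by rewrite ltnS ltnW // Hn.
  case: y Hy => // y Hy; exact: Hn.
- by case: H => x /HS [n Hn] <-; exists n.
- by case: H => x /HS [n Hn] <-; exists n.
- case: H => -[a b] [/HS [n Hn] /HS [m Hm]] <-; exists (maxn n m) => y /= [/Hn|/Hm] Hy;
    by rewrite leq_max Hy ?orbT.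
- case: H => x /HS [n Hn] <-; exists n => y /= /Hn; exact: ltnW.
- by case: H => -[x l] [/HS Hx _] <-; exact: bf_sub.
Qed.

Hypothesis hLA : forall phi, LA phi -> bf phi.

Lemma bnd_stage k phi : stage LA k phi -> bf phi.
Proof.
elim: k phi => [|k IH] phi /=.
  case=> [/hLA //|[a _ <-]]; exact: bnd_atom.
case=> [/IH //|]; exact: bnd_ops.
Qed.

Lemma Fr_fragment : fragment true (Fr LA).
Proof.
have Fin k phi : stage LA k phi -> Fr LA phi by exists k.
have Fin1 k phi : ops (stage LA k) phi -> Fr LA phi by move=> H; exists k.+1 => //; right.
split.
- move=> phi [k _ /bnd_stage H]; split => //.
- by move=> a _; exists 0%N => //; right; exists a.
- split; [|split; [|split; [|split]]].
  + move=> psi [k _ H]; apply: (Fin1 k); do 10 left; by exists (Neg psi).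
  + move=> psi [k _ H]; apply: (Fin1 k); do 9 left; right; by exists (Half psi).
  + move=> psi chi [k _ H]; split; apply: (Fin1 k).
      by do 8 left; right; exists (Plus psi chi).
    by do 7 left; right; exists (Plus psi chi).
  + move=> Phi [k _ H] i; apply: (Fin1 k); do 6 left; right; exists i => //; by exists (Conj Phi).
  + move=> psi [k _ H]; apply: (Fin1 k); do 5 left; right; by exists (Inf psi).
- split; [|split; [|split]].
  + move=> psi [k _ H]; apply: (Fin1 k); do 4 left; right; by exists psi.
  + move=> psi [k _ H]; apply: (Fin1 k); do 3 left; right; by exists psi.
  + move=> psi chi [k _ H] [m _ H2]; apply: (Fin1 (maxn k m)); do 2 left; right.
    exists (psi, chi) => //; split.
      exact: (@stage_mono L LA k (maxn k m) (leq_maxl k m) psi H).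
    exact: (@stage_mono L LA m (maxn k m) (leq_maxr k m) chi H2).
  + move=> psi [k _ H]; apply: (Fin1 k); do 1 left; right; by exists psi.
- move=> s phi _ [k _ H]; have [n Hn] := bnd_stage _ _ H.
  apply: (Fin1 k); right; exists (phi, mkseq s n) => //.
  rewrite /sub /=; apply: fsubst_ext => x /Hn Hx.
  by rewrite nth_mkseq.
Qed.

End Frag2.


Lemma LAC_range (L : signature) (LA : set (formula L)) :
  fragment false LA -> countable LA -> exists e : nat -> formula L, LAC LA `<=` range e.
Proof.
move=> frag cLA.
have hLA : forall phi, LA phi -> bf phi.
  move=> phi Hphi; case: frag => H1 _ _ _ _; exact: (H1 phi Hphi).2.
have sub : LAC LA `<=` Fr LA.
  move=> phi Hphi; apply: Hphi.
  - exact: Fr_fragment.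
  - exact: countable_Fr.
  - by move=> x Hx; exists 0%N => //; left.
have /countable_injP [g ginj] := countable_Fr LA cLA.
have /choice [e He] : forall n, exists y : formula L,
    (exists x, Fr LA x /\ g x = n) -> Fr LA y /\ g y = n.
  move=> n.
  have [[x Hx]|nH] := pselect (exists x, Fr LA x /\ g x = n).
    by exists x.
  by exists (Atom (ADist (Var 0) (Var 0))).
exists e => phi /sub Fphi.
have [H1 H2] := He (g phi) (ex_intro _ phi (conj Fphi erefl)).
exists (g phi) => //; apply: ginj => //; exact: mem_set.
Qed.

Unset Implicit Arguments.
Local Open Scope ring_scope.

Section Key.
Variables (R : realType) (L : signature) (P : Type) (le : P -> P -> Prop)
          (f : P -> atom L -> R).
Hypothesis le_refl : forall p, le p p.
Hypothesis le_tr : forall p q r, le p q -> le q r -> le p r.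

Lemma key_step (phi : formula L) (q : P) (eps : R) : 0 < eps ->
  has_inf [set F le f r phi | r in [set r | le r q]] ->
  exists2 r, le r q & F le f r phi + F le f r (Neg phi) < 1 + eps.
Proof.
move=> e0 hi.
have [y [r rq <-] ry] := inf_adherent e0 hi.
exists r => //.
rewrite /F /=.
set Sq := [set _ | _ in _] in ry.
have le1 : inf Sq <= inf [set Fv le f Var phi q0 | q0 in [set q0 | le q0 r]].
  apply: lb_le_inf; first by exists (Fv le f Var phi r), r.
  move=> x [s sr <-]; apply: (ge_inf hi.2); exists s => //; exact: le_tr sr rq.
rewrite /F in ry. move: ry; rewrite /Sq. lra.
Qed.

Lemma key (phi : formula L) (p : P) (eps : R) : 0 < eps ->
  exists2 r, le r p & F le f r phi + F le f r (Neg phi) < 1 + eps.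
Proof.
move=> e0.
have [hi|nhi] := pselect (has_inf [set F le f r phi | r in [set r | le r p]]).
  exact: key_step.
have ne : [set F le f r phi | r in [set r | le r p]] !=set0.
  by exists (F le f p phi), p.
have [_ [q qp <-] qneg] := (has_infPn ne).1 nhi 0.
have [hi2|nhi2] := pselect (has_inf [set F le f r phi | r in [set r | le r q]]).
  have [r rq H] := @key_step phi q eps e0 hi2; exists r => //; exact: le_tr rq qp.
exists q => //.
rewrite {2}/F /=. 
have -> : inf [set Fv le f Var phi q0 | q0 in [set q0 | le q0 q]] = 0 by exact: inf_out.
rewrite /F in qneg *. lra.
Qed.
End Key.



Theorem proposition2p12 (R : realType) (L : signature) (LA : set (formula L))
    (delta : atom L -> R -> R) (P : Type) (le : P -> P -> Prop)
    (f : P -> atom L -> R) :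
  fragment false LA -> countable LA ->
  (forall a eps, 0 < eps -> 0 < delta a eps) ->
  forcing_property le f delta ->
  forall p : P, exists G : set P, generic le f LA G /\ G p.
Proof.
move=> frag cLA _ [[lrefl [ltr _]] _ _ _] p.
have [e He] := @LAC_range L LA frag cLA.
pose epsk (k : nat) : R := (k.+1%:R)^-1.
have epsk0 k : 0 < epsk k by rewrite /epsk invr_gt0 ltr0Sn.
pose next (n : nat) (q : P) : P :=
  match @unpickle (nat * nat)%type n with
  | Some (i, k) => projT1 (cid2 (@key R L P le f lrefl ltr (e i) q (epsk k) (epsk0 k)))
  | None => q end.
have next_le n q : le (next n q) q.
  rewrite /next; case: unpickle => [[i k]|] //.
  by case: cid2.
have next_F i k q : let r := next (pickle (i, k)) q in
    F le f r (e i) + F le f r (Neg (e i)) < 1 + epsk k.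
  by rewrite /next pickleK /=; case: cid2.
pose fix chain n := match n with 0 => p | m.+1 => next m (chain m) end.
have chain_le m n : (n <= m)%N -> le (chain m) (chain n).
  elim: m => [|m IH]; first by rewrite leqn0 => /eqP ->.
  rewrite leq_eqVlt => /orP[/eqP -> //| ]; rewrite ltnS => /IH.
  exact: ltr (next_le _ _).
exists [set q | exists n, le (chain n) q]; split; last by exists 0%N.
split.
- by exists p, 0%N.
- move=> q1 q2 [n1 H1] [n2 H2]; exists (chain (maxn n1 n2)).
    by exists (maxn n1 n2).
  split.
    exact: (ltr _ _ _ (chain_le _ _ (leq_maxl n1 n2)) H1).
  exact: (ltr _ _ _ (chain_le _ _ (leq_maxr n1 n2)) H2).
- by move=> q1 q2 [n H] H2; exists n; exact: (ltr _ _ _ H H2).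
- move=> phi r /He [i _ <-] _ r1.
  have [k Hk] : exists k, epsk k < r - 1.
    have [k Hk] := @ltr_add_invr R 1 r r1; exists k; rewrite /epsk; move: Hk; set z := (_ ^-1); lra.
  exists (chain (pickle (i, k)).+1); first by exists (pickle (i, k)).+1.
  have := next_F i k (chain (pickle (i, k))). rewrite /=. lra.
Qed.
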